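(* Let $(R,\mathfrak{m})$ be a local integral domain satisfying (R$_1$) whose integral closure $R'$ is a generalized Krull domain, and such that $P \cap R$ is a height one prime of $R$ for every height one prime $P$ of $R'$. Let $S$ be an integral overring of $R$ such that $R \subseteq S$ satisfies going-down. Then $S$ is local.
   Context: ''Local'' means having a unique maximal ideal; an overring of a domain $R$ is a ring between $R$ and its fraction field. A ring extension $A \subseteq B$ satisfies going-down if whenever $\mathfrak{p} \subset \mathfrak{q}$ are primes of $A$ and $Q$ is a prime of $B$ with $Q \cap A = \mathfrak{q}$, there is a prime $P \subseteq Q$ of $B$ with $P \cap A = \mathfrak{p}$. A ring satisfies (R$_1$) if its localization at every height one prime is a valuation domain. A domain $A$ is a generalized Krull domain if (1) $A = \bigcap A_{\mathfrak{p}}$ over all height one primes $\mathfrak{p}$, (2) every nonzero element lies in only finitely many height one primes, and (3) $A$ satisfies (R$_1$). *)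

(* Defs.v *)
(* Commutative algebra of subrings of a field K,
   with subsets represented as predicates K -> Prop. *)
From HB Require Import structures.
From mathcomp Require Import all_boot all_algebra.
Set Implicit Arguments. Unset Strict Implicit. Unset Printing Implicit Defensive.
Import GRing.Theory.
Local Open Scope ring_scope.

Section Defs.
Variable K : fieldType.

Definition subring (A : K -> Prop) : Prop :=
  [/\ A 0, A 1, (forall x y, A x -> A y -> A (x - y))
    & (forall x y, A x -> A y -> A (x * y))].

Definition frac_field_is (A : K -> Prop) : Prop :=
  forall x : K, exists a b, [/\ A a, A b, b != 0 & x = a / b].

Definition set_eq (P Q : K -> Prop) : Prop := forall x, P x <-> Q x.
Definition psubset (P Q : K -> Prop) : Prop := forall x, P x -> Q x.

Definition ideal (A I : K -> Prop) : Prop :=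
  [/\ psubset I A, I 0, (forall x y, I x -> I y -> I (x + y))
    & (forall a x, A a -> I x -> I (a * x))].

Definition prime_ideal (A P : K -> Prop) : Prop :=
  [/\ ideal A P, ~ P 1
    & forall a b, A a -> A b -> P (a * b) -> P a \/ P b].

Definition maximal_ideal (A M : K -> Prop) : Prop :=
  [/\ ideal A M, ~ M 1
    & forall J, ideal A J -> ~ J 1 -> psubset M J -> psubset J M].

Definition local_ring (A : K -> Prop) : Prop :=
  exists M, maximal_ideal A M /\ forall N, maximal_ideal A N -> set_eq N M.

Definition height_one (A P : K -> Prop) : Prop :=
  [/\ prime_ideal A P, (exists x, P x /\ x != 0)
    & forall Q, prime_ideal A Q -> psubset Q P ->
        (forall x, Q x -> x = 0) \/ set_eq Q P].

(* Localization A_P, viewed inside the fraction field K. *)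
Definition localize (A P : K -> Prop) : K -> Prop :=
  fun x => exists a s, [/\ A a, A s, ~ P s & x = a / s].

Definition valuation_domain (V : K -> Prop) : Prop :=
  subring V /\ forall x : K, x != 0 -> V x \/ V x^-1.

Definition R1 (A : K -> Prop) : Prop :=
  forall P, height_one A P -> valuation_domain (localize A P).

Definition generalized_Krull (A : K -> Prop) : Prop :=
  [/\ (forall x, A x <-> (forall P, height_one A P -> localize A P x)),
      (forall x, A x -> x != 0 -> exists (n : nat) (Qs : 'I_n -> K -> Prop),
          forall P, height_one A P -> P x -> exists i, set_eq P (Qs i))
    & R1 A].

Definition integral_over (A : K -> Prop) (x : K) : Prop :=
  exists p : {poly K}, [/\ p \is monic, (forall i, A p`_i) & root p x].

Definition integral_closure (A : K -> Prop) : K -> Prop := integral_over A.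

Definition inter (P A : K -> Prop) : K -> Prop := fun x => P x /\ A x.

Definition going_down (A B : K -> Prop) : Prop :=
  forall p q Q, prime_ideal A p -> prime_ideal A q -> psubset p q ->
    prime_ideal B Q -> set_eq (inter Q A) q ->
    exists P, [/\ prime_ideal B P, psubset P Q & set_eq (inter P A) p].

End Defs.

(* Main.v *)
From HB Require Import structures.
From mathcomp Require Import all_boot all_algebra.
From mathcomp Require Import boolp classical_sets.
From mathcomp Require Import ring.
Require Import Defs.
Set Implicit Arguments. Unset Strict Implicit. Unset Printing Implicit Defensive.
Import GRing.Theory.
Local Open Scope ring_scope.
Local Open Scope classical_set_scope.

Section H.
Variable K : fieldType.
Implicit Types A I : K -> Prop.

Lemma sr_opp A x : subring A -> A x -> A (- x).
Proof. by case=> A0 _ AB _ Ax; rewrite -sub0r; apply: AB. Qed.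
Lemma sr_add A x y : subring A -> A x -> A y -> A (x + y).
Proof. move=> hA Ax Ay; case: (hA) => _ _ AB _; rewrite -[y]opprK; apply: AB => //; exact: sr_opp. Qed.
Lemma sr_mul A x y : subring A -> A x -> A y -> A (x * y).
Proof. by case=> _ _ _ AM; apply: AM. Qed.
Lemma sr_exp A x n : subring A -> A x -> A (x ^+ n).
Proof. move=> hA Ax; elim: n => [|n IH]; first by case: hA. by rewrite exprS; apply: sr_mul. Qed.

Lemma sum_in (P : K -> Prop) n (F : 'I_n -> K) : P 0 -> (forall x y, P x -> P y -> P (x + y)) ->
  (forall i, P (F i)) -> P (\sum_(i < n) F i).
Proof.
move=> P0 PD PF; elim: n F PF => [|n IH] F PF; first by rewrite big_ord0.
by rewrite big_ord_recr /=; apply: PD => //; apply: IH.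
Qed.

Lemma homog_id (q : {poly K}) (t b : K) :
  b ^+ (size q).-1 * q.[t] = \sum_(i < size q) q`_i * (t*b)^+i * b^+((size q).-1 - i).
Proof.
rewrite horner_coef mulr_sumr; apply: eq_bigr => i _.
have hi : (i <= (size q).-1)%N.
  have h := ltn_ord i; move: (nat_of_ord i) h => j; by case: (size q).
rewrite exprMn -!mulrA -exprD subnKC //; rewrite mulrCA; congr (_ * _); by rewrite mulrC.
Qed.

Lemma homog_split A (q : {poly K}) b : subring A -> q \is monic -> (forall i, A q`_i) -> A b ->
  exists c, A c /\ \sum_(i < size q) q`_i * b^+((size q).-1 - i) = 1 + b * c.
Proof.
move=> hA mq Aq Ab.
have : (0 < size q)%N by rewrite size_poly_gt0 monic_neq0.
case E: (size q) => [//|k] _ /=.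
exists (\sum_(i < k) q`_i * b^+(k.-1 - i)); split.
  apply: sum_in => //; first by case: hA. by move=> ??; apply: sr_add.
  by move=> i; apply: sr_mul => //; apply: sr_exp.
rewrite big_ord_recr /= subnn expr0 mulr1.
have -> : q`_k = 1 by move/monicP: mq; rewrite /lead_coef E.
rewrite addrC; congr (_ + _); rewrite mulr_sumr; apply: eq_bigr => i _.
rewrite mulrCA -exprS; congr (_ * _ ^+ _).
have h := ltn_ord i; move: (nat_of_ord i) h => j.
clear i E; by case: k => [//|k] hj /=; rewrite subSn.
Qed.
Lemma exists_max A I : subring A -> ideal A I -> ~ I 1 ->
  exists M, maximal_ideal A M /\ psubset I M.
Proof.
move=> hA hI nI1.
pose P := fun J : set K => J = set0 \/ [/\ ideal A J, ~ J 1 & psubset I J].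
have hz : forall F : set (set K), F `<=` P -> total_on F subset -> P (\bigcup_(X in F) X).
  move=> F FP Ftot.
  have memb J x : F J -> J x -> [/\ ideal A J, ~ J 1 & psubset I J].
    by move=> FJ Jx; case: (FP J FJ) => // E; rewrite E in Jx.
  case: (pselect (exists J, F J /\ exists x, J x)) => [[J0 [FJ0 [x0 Jx0]]]|no].
    have [[J0A J00 _ _] _ IJ0] := memb J0 x0 FJ0 Jx0.
    right; split.
    - split.
      + by move=> x [J FJ Jx]; have [[JA _ _ _] _ _] := memb J x FJ Jx; apply: JA.
      + by exists J0.
      + move=> x y [J1 FJ1 J1x] [J2 FJ2 J2y].
        case: (Ftot J1 J2 FJ1 FJ2) => sub.
          exists J2 => //; have [[_ _ JD _] _ _] := memb J2 y FJ2 J2y; apply: JD => //; exact: sub.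
        exists J1 => //; have [[_ _ JD _] _ _] := memb J1 x FJ1 J1x; apply: JD => //; exact: sub.
      + move=> a x Aa [J FJ Jx]; exists J => //.
        by have [[_ _ _ JM] _ _] := memb J x FJ Jx; apply: JM.
    - by move=> [J FJ J1]; have [_ nJ1 _] := memb J 1 FJ J1.
    - by move=> x Ix; exists J0 => //; apply: IJ0.
  left; apply/seteqP; split => x // [J FJ Jx]; exfalso; apply: no; exists J; split => //; by exists x.
have [M [PM Mmax]] := Zorn_bigcup hz.
case: PM => [E|[MA nM1 IM]].
  exfalso; apply: (Mmax I); last by right; split.
  rewrite E; split; first by [].
  by move=> sub; case: hI => _ I0 _ _; exact: (sub 0 I0).
exists M; split => //; split => // J hJ nJ1 MJ x Jx.
apply: contrapT => nMx; apply: (Mmax J); first by split => // sub; exact: nMx (sub x Jx).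
right; split => //; move=> y Iy; exact: MJ (IM y Iy).
Qed.

Lemma max_prime A M : subring A -> maximal_ideal A M -> prime_ideal A M.
Proof.
move=> hA hM; case: (hM) => [[MA M0 MD MM] nM1 Mmax]; split => // a b Aa Ab Mab.
case: (pselect (M a)) => [|nMa]; first by left.
right.
pose J := fun y => exists n s, [/\ M n, A s & y = n + s * a].
have hJ : ideal A J.
  split.
  - move=> y [n [s [Mn As ->]]]; apply: sr_add => //; [exact: MA | exact: sr_mul].
  - by exists 0, 0; rewrite mul0r addr0; split => //; case: hA.
  - move=> x y [n1 [s1 [M1 A1 ->]]] [n2 [s2 [M2 A2 ->]]]; exists (n1 + n2), (s1 + s2); split.
    + exact: MD. + exact: sr_add. + by rewrite mulrDl addrACA.
  - move=> c x Ac [n [s [Mn As ->]]]; exists (c * n), (c * s); split.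
    + exact: MM. + exact: sr_mul. + by rewrite mulrDr mulrA.
case: (pselect (J 1)) => [[n [s [Mn As E]]]|nJ1].
  have -> : b = b * n + s * (a * b) by rewrite -{1}[b]mul1r E; ring.
  by apply: MD; apply: MM.
exfalso; apply: nMa; apply: (Mmax J hJ nJ1).
  by move=> x Mx; exists x, 0; rewrite mul0r addr0; split => //; case: hA.
by exists 0, 1; rewrite mul1r add0r; split => //; case: hA.
Qed.

Lemma local_in_max A M : subring A -> maximal_ideal A M ->
  (forall N, maximal_ideal A N -> set_eq N M) ->
  forall J, ideal A J -> ~ J 1 -> psubset J M.
Proof.
move=> hA hM hU J hJ nJ1 x Jx.
have [N [hN JN]] := exists_max hA hJ nJ1.
by apply/(hU N hN); apply: JN.
Qed.

Lemma local_unit A M a : subring A -> maximal_ideal A M ->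
  (forall N, maximal_ideal A N -> set_eq N M) -> A a -> ~ M a ->
  exists b, A b /\ b * a = 1.
Proof.
move=> hA hM hU Aa nMa.
pose J := fun y => exists c, A c /\ y = c * a.
have hJ : ideal A J.
  split.
  - by move=> y [c [Ac ->]]; apply: sr_mul.
  - by exists 0; rewrite mul0r; split => //; case: hA.
  - move=> x y [c1 [A1 ->]] [c2 [A2 ->]]; exists (c1 + c2); split; [exact: sr_add | by rewrite mulrDl].
  - move=> c x Ac [d [Ad ->]]; exists (c * d); split; [exact: sr_mul | by rewrite mulrA].
case: (pselect (J 1)) => [[c [Ac E]]|nJ1]; first by exists c.
exfalso; apply: nMa; apply: (local_in_max hA hM hU hJ nJ1).
by exists 1; rewrite mul1r; split => //; case: hA.
Qed.

Lemma inter_prime (R S N : K -> Prop) : subring R -> psubset R S -> prime_ideal S N ->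
  prime_ideal R (inter N R).
Proof.
move=> hR RS [[NS N0 ND NM] nN1 Np]; split.
- split.
  + by move=> x [].
  + by split => //; case: hR.
  + by move=> x y [Nx Rx] [Ny Ry]; split; [apply: ND | apply: sr_add].
  + by move=> a x Ra [Nx Rx]; split; [apply: NM => //; apply: RS | apply: sr_mul].
- by case.
- move=> a b Ra Rb [Nab _]; case: (Np a b (RS a Ra) (RS b Rb) Nab) => h; [left|right]; by split.
Qed.

Lemma pow_cong (S N : K -> Prop) y i : subring S -> ideal S N -> S y -> N (1 - y) -> N (1 - y ^+ i).
Proof.
move=> hS [NS N0 ND NM] Sy Ny; elim: i => [|i IH]; first by rewrite expr0 subrr.
have -> : 1 - y ^+ i.+1 = (1 - y ^+ i) + y ^+ i * (1 - y) by rewrite exprS; ring.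
by apply: ND => //; apply: NM => //; apply: sr_exp.
Qed.

Lemma stepC (R S N MR : K -> Prop) b : subring R -> subring S -> psubset R S ->
  psubset S (integral_closure R) -> maximal_ideal R MR ->
  (forall N', maximal_ideal R N' -> set_eq N' MR) -> maximal_ideal S N -> MR b -> N b.
Proof.
move=> hR hS RS SR' hMR hU hN MRb; apply: contrapT => nNb.
have hN' := hN; case: hN' => [[NS N0 ND NM] nN1 Nmax].
have hMR' := hMR; case: hMR' => [[MRA MR0 MRD MRM] nMR1 _].
have Rb : R b by apply: MRA.
pose J := fun y => exists n s, [/\ N n, S s & y = n + s * b].
have hJ : ideal S J.
  split.
  - move=> y [n [s [Mn As ->]]]; apply: sr_add => //; [exact: NS | apply: sr_mul => //; exact: RS].
  - by exists 0, 0; rewrite mul0r addr0; split => //; case: hS.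
  - move=> x y [n1 [s1 [M1 A1 ->]]] [n2 [s2 [M2 A2 ->]]]; exists (n1 + n2), (s1 + s2); split.
    + exact: ND. + exact: sr_add. + by rewrite mulrDl addrACA.
  - move=> c x Ac [n [s [Mn As ->]]]; exists (c * n), (c * s); split.
    + exact: NM. + exact: sr_mul. + by rewrite mulrDr mulrA.
case: (pselect (J 1)) => [[n [t [Nn St E]]]|nJ1]; last first.
  apply: nNb; apply: (Nmax J hJ nJ1).
    by move=> x Mx; exists x, 0; rewrite mul0r addr0; split => //; case: hS.
  by exists 0, 1; rewrite mul1r add0r; split => //; case: hS.
have [q [mq Rq rq]] := SR' t St.
have [c [Rc Ec]] := homog_split hR mq Rq Rb.
have Nu : N (1 + b * c).
  rewrite -Ec.
  set F := (X in N X).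
  have -> : F = F - b ^+ (size q).-1 * q.[t] by rewrite (rootP rq) mulr0 subr0.
  rewrite /F homog_id -sumrB; apply: sum_in => //.
  move=> i; rewrite (_ : _ - _ = (q`_i * b ^+ ((size q).-1 - i)) * (1 - (t * b) ^+ i)); last by ring.
  apply: NM.
    by apply: RS; apply: sr_mul => //; apply: sr_exp.
  have hNi : ideal S N by case: hN.
  apply: (pow_cong _ hS hNi); first by apply: sr_mul => //; apply: RS.
  by have -> : 1 - t * b = n by rewrite E; ring.
have Ru : R (1 + b * c).
  apply: (sr_add hR); first by case: hR.
  exact: (sr_mul hR).
have nMu : ~ MR (1 + b * c).
  move=> Mu; apply: nMR1.
  have -> : 1 = (1 + b * c) + (- c) * b by ring.
  by apply: MRD => //; apply: MRM => //; apply: sr_opp.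
have [v [Rv Ev]] := local_unit hR hMR hU Ru nMu.
by apply: nN1; rewrite -Ev; apply: NM => //; apply: RS.
Qed.
End H.

Theorem lemma4p2 (K : fieldType) (R S : K -> Prop) :
  subring R -> frac_field_is R -> local_ring R -> R1 R ->
  generalized_Krull (integral_closure R) ->
  (forall P, height_one (integral_closure R) P -> height_one R (inter P R)) ->
  subring S -> psubset R S -> psubset S (integral_closure R) ->
  going_down R S ->
  local_ring S.
Proof.
move=> hR _ [MR [hMR hU]] hR1 hGK hP hS RS SR' hGD.
have RR' : psubset R (integral_closure R) by move=> x Rx; apply: SR'; apply: RS.
have stepB : forall N P x, maximal_ideal S N -> height_one (integral_closure R) P ->
    P x -> S x -> N x.
  move=> N P x hN hP1 Px Sx.
  have hN' := max_prime hS hN.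
  have hp := hP P hP1.
  have hp' := hp; case: hp' => [pprime _ _].
  have [_ Vval] := hR1 _ hp.
  have hP1' := hP1; case: hP1' => [[[PA P0 PD PM] nP1 _] _ _].
  have hNi := hN; case: hNi => [[NS N0 ND NM] _ _].
  case: (eqVneq x 0) => [->|xn0]; first exact: N0.
  have sn0 : forall s, ~ inter P R s -> s != 0.
    by move=> s nps; apply/eqP => s0; apply: nps; rewrite s0; split => //; case: hR.
  case: (Vval x xn0) => [[a [s [Ra Rs nps Ex]]] | [a [s [Ra Rs nps Ex]]]].
  - have Ea : a = x * s by rewrite Ex mulfVK // sn0.
    have pa : inter P R a by split => //; rewrite Ea mulrC; apply: PM => //; apply: RR'.
    have pq : psubset (inter P R) (inter N R).
      move=> y py; split; last by case: py.
      apply: (stepC hR hS RS SR' hMR hU hN).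
      case: pprime => hpi np1 _.
      exact: (local_in_max hR hMR hU hpi np1).
    have [Q [hQ QN QR]] := hGD (inter P R) (inter N R) N pprime
       (inter_prime hR RS hN') pq hN' (fun y => conj id id).
    have Qa : inter Q R a by apply/QR.
    case: hQ => _ _ Qp.
    case: (Qp x s Sx (RS s Rs)); first by rewrite -Ea; case: Qa.
      by apply: QN.
    by move=> Qs; exfalso; apply: nps; apply/QR; split.
  - have Es : s = a * x.
      have s0 := sn0 s nps.
      by rewrite -[s]mulr1 -(mulVf xn0) Ex mulrA mulrCA mulfV // mulr1.
    exfalso; apply: nps; split => //; rewrite Es; apply: PM => //; exact: RR'.
have key : forall N1 N2, maximal_ideal S N1 -> maximal_ideal S N2 -> psubset N1 N2.
  move=> N1 N2 h1 h2 x N1x; apply: contrapT => nN2x.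
  have h1' := h1; case: h1' => [[NS N0 ND NM] nN1 _].
  have h2' := h2; case: h2' => [[_ N20 _ _] _ _].
  have Sx : S x by apply: NS.
  have xn0 : x != 0 by apply/eqP => x0; apply: nN2x; rewrite x0.
  have R'x : integral_closure R x^-1.
    case: hGK => GK1 _ _; apply/GK1 => P hP1.
    exists 1, x; split.
    + by apply: RR'; case: hR.
    + exact: SR'.
    + by move=> Px; apply: nN2x; apply: (stepB N2 P).
    + by rewrite div1r.
  have [q [mq Rq rq]] := R'x.
  have Sq : forall i, S q`_i by move=> i; apply: RS.
  have [c [Sc Ec]] := homog_split hS mq Sq Sx.
  have := homog_id q x^-1 x.
  rewrite (rootP rq) mulr0 mulVf //.
  under eq_bigr do rewrite expr1n mulr1.
  rewrite Ec => E0.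
  apply: nN1; have -> : 1 = (- c) * x by rewrite mulNr mulrC; apply/eqP; rewrite -subr_eq0 opprK -E0.
  apply: NM => //; exact: (sr_opp hS).
have hz : ideal S (fun x => x = 0).
  split.
  - by move=> x ->; case: hS.
  - by [].
  - by move=> x y -> ->; rewrite addr0.
  - by move=> a x _ ->; rewrite mulr0.
have [N0 [hN0 _]] := exists_max hS hz (fun E : (1:K) = 0 => negP (oner_neq0 K) (introT eqP E)).
exists N0; split => // N hN y; split; [exact: key | exact: key].
Qed.
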